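(* Let $\mathcal F$ be the family of all graphs on fewer than $25$ vertices with density $e(F)/v(F)>10/7$, and let $G$ be a $(K_3,1)$-stable graph that contains no member of $\mathcal F$ as a subgraph. Then every connected component of $G$ is isomorphic either to $TT$ or to $DD$.
   Context: With respect to a graph $G$: a bad vertex (bad edge) is a vertex (edge) of $G$ lying in no triangle of $G$; a bad pair is a set $\{u,v\}\subseteq V(G)$ of two vertices such that no triangle of $G$ contains exactly one of $u,v$; a small component is a connected component with at most $4$ vertices. $G$ is $(K_3,1)$-stable if it has no bad vertex, no bad edge, no bad pair and no small component. $TT$ is the graph on $v_1,\dots,v_5$ with edges $v_1v_2,v_1v_3,v_2v_3,v_2v_4,v_3v_4,v_3v_5,v_4v_5$. $DD$ is the graph on $x,y_1,z_1,z_2,y_2,z_3,z_4$ with edges $xy_1,xz_1,xz_2,y_1z_1,y_1z_2,xy_2,xz_3,xz_4,y_2z_3,y_2z_4$. *)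

(* Defs.v *)
From mathcomp Require Import all_boot.
Set Implicit Arguments. Unset Strict Implicit. Unset Printing Implicit Defensive.

Definition simple_graph (T : finType) (e : rel T) : Prop :=
  symmetric e /\ irreflexive e.

Definition in_triangle (T : finType) (e : rel T) (v : T) : Prop :=
  exists b c, [&& e v b, e v c & e b c].

Definition bad_vertex (T : finType) (e : rel T) (v : T) : Prop :=
  ~ in_triangle e v.

Definition bad_edge (T : finType) (e : rel T) (u v : T) : Prop :=
  e u v /\ ~ (exists w, e u w && e v w).

Definition tri_with_without (T : finType) (e : rel T) (u v : T) : Prop :=
  exists b c, [&& e u b, e u c, e b c, b != v & c != v].

Definition bad_pair (T : finType) (e : rel T) (u v : T) : Prop :=
  u != v /\ ~ tri_with_without e u v /\ ~ tri_with_without e v u.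

Definition component (T : finType) (e : rel T) (x : T) : {set T} :=
  [set y | connect e x y].

Definition small_component (T : finType) (e : rel T) (x : T) : Prop :=
  #|component e x| <= 4.

Definition K3_1_stable (T : finType) (e : rel T) : Prop :=
  (forall v, ~ bad_vertex e v) /\
  (forall u v, ~ bad_edge e u v) /\
  (forall u v, ~ bad_pair e u v) /\
  (forall x, ~ small_component e x).

Definition num_edges (n : nat) (H : rel 'I_n) : nat :=
  #|[set p : 'I_n * 'I_n | (p.1 < p.2) && H p.1 p.2]|.

Definition contains_subgraph (T : finType) (e : rel T) (n : nat) (H : rel 'I_n) : Prop :=
  exists f : 'I_n -> T, injective f /\ (forall i j, H i j -> e (f i) (f j)).

Definition induced_iso (T : finType) (e : rel T) (S : {set T}) (n : nat) (H : rel 'I_n) : Prop :=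
  exists f : 'I_n -> T, injective f /\ (forall y, y \in S <-> exists i, f i = y)
    /\ (forall i j, e (f i) (f j) = H i j).

Definition sym_of (n : nat) (l : seq (nat * nat)) : rel 'I_n :=
  fun i j => ((nat_of_ord i, nat_of_ord j) \in l) || ((nat_of_ord j, nat_of_ord i) \in l).

(* TT: v1..v5 as 0..4 *)
Definition TT : rel 'I_5 :=
  @sym_of 5 [:: (0,1); (0,2); (1,2); (1,3); (2,3); (2,4); (3,4)].

(* DD: x=0, y1=1, z1=2, z2=3, y2=4, z3=5, z4=6 *)
Definition DD : rel 'I_7 :=
  @sym_of 7 [:: (0,1); (0,2); (0,3); (1,2); (1,3); (0,4); (0,5); (0,6); (4,5); (4,6)].

(* Main.v *)
Require Import Defs.
From mathcomp Require Import all_boot zify.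
From Stdlib Require Import Classical.
Set Implicit Arguments. Unset Strict Implicit. Unset Printing Implicit Defensive.

Section G.
Variable (T : finType) (e : rel T).
Hypothesis sym : symmetric e.
Hypothesis irr : irreflexive e.
Ltac ar := repeat match goal with
  | H : is_true (_ \in _) |- _ => clear H
  | H : is_true (_ \notin _) |- _ => clear H
  | H : is_true (_ != _) |- _ => clear H
  | H : is_true (e _ _) |- _ => clear H
  | H : is_true (connect _ _ _) |- _ => clear H
  | H : forall _, _ |- _ => clear H
  | H : ~ _ |- _ => clear H
  end; lia.


Definition deg (S : {set T}) (v : T) : nat := \sum_(y in S) e v y.
Definition E2 (S : {set T}) : nat := \sum_(u in S) deg S u.

Lemma degU1 (S : {set T}) (v u : T) : v \notin S -> deg (v |: S) u = e u v + deg S u.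
Proof. by move=> vS; rewrite /deg big_setU1. Qed.

Lemma E2U1 (S : {set T}) (v : T) : v \notin S -> E2 (v |: S) = E2 S + 2 * deg S v.
Proof.
move=> vS; rewrite /E2 big_setU1 //= degU1 // irr add0n.
rewrite (eq_bigr (fun u => e v u + deg S u)); last by move=> u _; rewrite degU1 // sym.
rewrite big_split /=. rewrite -/(deg S v). lia.
Qed.

Lemma num_edges2 n (H : rel 'I_n) : symmetric H -> irreflexive H ->
  2 * num_edges H = \sum_i \sum_j H i j.
Proof.
move=> sH iH.
have E : num_edges H = \sum_(i : 'I_n) \sum_(j : 'I_n) ((i < j) && H i j).
  rewrite /num_edges -sum1_card pair_bigA /= big_mkcond /=.
  by apply: eq_bigr => p _; rewrite inE; case: (_ && _).
have E' : num_edges H = \sum_(i : 'I_n) \sum_(j : 'I_n) ((j < i) && H i j).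
  rewrite E exchange_big /=; apply: eq_bigr => i _; apply: eq_bigr => j _.
  by rewrite sH.
rewrite mul2n -addnn {1}E E' -big_split /=; apply: eq_bigr => i _.
rewrite -big_split /=; apply: eq_bigr => j _.
case: (ltngtP i j) => h.
- by rewrite /= addn0.
- by rewrite /= add0n.
- have hij : i = j by apply: val_inj.
  by rewrite hij iH andbF.
Qed.

Hypothesis dense : forall (n : nat) (H : rel 'I_n),
      n < 25 -> simple_graph H -> 10 * n < 7 * num_edges H ->
      ~ contains_subgraph e H.

Lemma no_dense (S : {set T}) : #|S| < 25 -> 20 * #|S| < 7 * E2 S -> False.
Proof.
move=> h25 hd.
pose f := @enum_val T (mem S).
pose H : rel 'I_#|S| := fun i j => e (f i) (f j).
have sH : symmetric H by move=> i j; rewrite /H sym.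
have iH : irreflexive H by move=> i; rewrite /H irr.
apply: (dense h25 (conj sH iH)).
  have : 2 * num_edges H = E2 S.
    rewrite num_edges2 // /E2 [RHS]big_enum_val; apply: eq_bigr => i _.
    by rewrite /deg [RHS]big_enum_val.
  lia.
exists f; split; first exact: enum_val_inj.
by move=> i j.
Qed.

Definition closed (S : {set T}) := forall u v, u \in S -> e u v -> v \in S.
Definition free_pair (S : {set T}) := exists p q r,
  p \in S /\ q \in S /\ r \in S /\ e p q /\ e p r /\ e q r /\
  (forall y, y \in S -> e p y -> y = q \/ y = r) /\
  (forall y, y \in S -> e q y -> y = p \/ y = r).

Hypothesis nbe : forall u v, ~ bad_edge e u v.
Hypothesis nbp : forall u v, ~ bad_pair e u v.

Lemma tri u v : e u v -> exists w, e u w /\ e v w.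
Proof.
move=> huv; case: (classic (exists w, e u w && e v w)) => [[w /andP[]]|h].
  by move=> *; exists w.
by case: (nbe (conj huv h)).
Qed.

Lemma se u v : e u v -> e v u.
Proof. by rewrite sym. Qed.

Lemma neq_e u v : e u v -> u != v.
Proof. by apply: contraTneq => ->; rewrite irr. Qed.

Lemma closed_free S : closed S -> free_pair S -> False.
Proof.
move=> cS [p [q [r [hp [hq [hr [hpq [hpr [hqr [Hp Hq]]]]]]]]]].
apply: (nbp (u:=p) (v:=q)); split; first exact: neq_e.
split.
- move=> [b [c /and5P[h1 h2 h3 h4 h5]]].
  have bS := cS _ _ hp h1; have cS' := cS _ _ hp h2.
  case: (Hp _ bS h1) => hb; first by rewrite hb eqxx in h4.
  case: (Hp _ cS' h2) => hc; first by rewrite hc eqxx in h5.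
  by rewrite hb hc irr in h3.
- move=> [b [c /and5P[h1 h2 h3 h4 h5]]].
  have bS := cS _ _ hq h1; have cS' := cS _ _ hq h2.
  case: (Hq _ bS h1) => hb; first by rewrite hb eqxx in h4.
  case: (Hq _ cS' h2) => hc; first by rewrite hc eqxx in h5.
  by rewrite hb hc irr in h3.
Qed.

Lemma deg_card (S : {set T}) v : deg S v = #|[set y in S | e v y]|.
Proof.
rewrite /deg -sum1_card [RHS]big_mkcond [LHS]big_mkcond /=.
by apply: eq_bigr => y _; rewrite !inE; case: (y \in S); case: (e v y).
Qed.

Lemma deg1 (S : {set T}) v y : y \in S -> e v y -> 1 <= deg S v.
Proof. by move=> hy he; rewrite deg_card; apply/card_gt0P; exists y; rewrite inE hy he. Qed.

Lemma deg2 (S : {set T}) v y1 y2 : y1 \in S -> y2 \in S -> y1 != y2 ->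
  e v y1 -> e v y2 -> 2 <= deg S v.
Proof.
move=> h1 h2 h12 e1 e2; rewrite deg_card; apply/card_gt1P; exists y1, y2.
by rewrite !inE h1 h2 e1 e2.
Qed.

Lemma deg3 (S : {set T}) v y1 y2 y3 : y1 \in S -> y2 \in S -> y3 \in S ->
  y1 != y2 -> y2 != y3 -> y3 != y1 ->
  e v y1 -> e v y2 -> e v y3 -> 3 <= deg S v.
Proof.
move=> h1 h2 h3 h12 h23 h31 e1 e2 e3; rewrite deg_card; apply/card_gt2P.
by exists y1, y2, y3; rewrite !inE h1 h2 h3 e1 e2 e3.
Qed.

Lemma E2U1ge (S : {set T}) v k : v \notin S -> k <= deg S v -> E2 S + 2 * k <= E2 (v |: S).
Proof. move=> vS hk; rewrite E2U1 //; ar. Qed.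

Lemma cardU1 (S : {set T}) v : v \notin S -> #|v |: S| = #|S| + 1.
Proof. by move=> vS; rewrite cardsU1 vS addnC. Qed.

Lemma back (S : {set T}) x u : closed S -> connect e x u -> u \in S -> x \in S.
Proof.
move=> cS /connectP [p hp ->]; elim: p x hp => [|w p IH] x //= /andP [hxw hp] H.
by apply: (cS w); [exact: IH | rewrite sym].
Qed.

Lemma fwd (S : {set T}) x y : closed S -> x \in S -> connect e x y -> y \in S.
Proof.
move=> cS hx /connectP [p hp ->]; elim: p x hp hx => [|w p IH] x //= /andP [hxw hp] H.
by apply: IH => //; exact: (cS x).
Qed.

Lemma comp_eq x (S : {set T}) u : closed S -> u \in S -> connect e x u ->
  (forall y, y \in S -> connect e x y) -> component e x = S.
Proof.
move=> cS hu hxu hS; apply/setP => y; rewrite inE; apply/idP/idP; last exact: hS.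
by apply: fwd => //; exact: back hxu hu.
Qed.


Definition Inv (S : {set T}) := 21 * #|S| <= 7 * E2 S + 21.
Definition P6 (S : {set T}) := 20 * #|S| <= 7 * E2 S + 6.

Lemma chain (P : {set T} -> Prop) :
 (forall S, P S -> Inv S -> #|S| <= 21 -> ~ closed S ->
    exists S', P S' /\ Inv S' /\ #|S'| = #|S| + 2 /\ free_pair S') ->
 forall S, P S -> Inv S -> #|S| <= 23 -> free_pair S -> False.
Proof.
move=> hstep S; move: {2}(24 - #|S|) (leqnn (24 - #|S|)) => k.
elim: k S => [|k IH] S hk hP hI h23 hf.
  by apply: (no_dense (S:=S)); rewrite /Inv in hI; ar.
case: (leqP 22 #|S|) => h.
  by apply: (no_dense (S:=S)); rewrite /Inv in hI; ar.
case: (classic (closed S)) => hc; first exact: closed_free hc hf.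
have [S' [hP' [hI' [hc' hf']]]] := hstep S hP hI h hc.
by apply: (IH S') => //; ar.
Qed.

Lemma not_closed (S : {set T}) : ~ closed S ->
  exists u v z, [/\ u \in S, v \notin S, e u v, e u z & e v z].
Proof.
move=> hc; apply: NNPP => hn; apply: hc => u v hu huv.
apply: NNPP => hv; apply: hn; have [z [h1 h2]] := tri huv.
by exists u, v, z; split => //; apply/negP.
Qed.

Lemma excl (S : {set T}) v u : ~ (forall y, y \in S -> e v y -> y = u) ->
  exists y, [/\ y \in S, e v y & y != u].
Proof.
move=> h; apply: NNPP => hn; apply: h => y hy hv; apply: NNPP => hyu.
by apply: hn; exists y; split => //; apply/eqP.
Qed.

Lemma Lstep (S : {set T}) u v z : u \in S -> v \notin S -> z \notin S ->
  e u v -> e u z -> e v z ->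
  (forall y, y \in S -> e v y -> y = u) -> (forall y, y \in S -> e z y -> y = u) ->
  [/\ #|z |: (v |: S)| = #|S| + 2, E2 S + 6 <= E2 (z |: (v |: S))
    & free_pair (z |: (v |: S))].
Proof.
move=> hu hv hz huv huz hvz Hv Hz.
have nvz := neq_e hvz.
have zS : z \notin v |: S by rewrite !inE negb_or eq_sym nvz.
have nuv : u != v by apply: contraNneq hv => <-.
split.
- by rewrite cardU1 // cardU1 //; ar.
- have h1 := E2U1ge hv (deg1 hu (se huv)).
  have h2 : 2 <= deg (v |: S) z.
    by apply: (deg2 (y1 := u) (y2 := v)) => //; rewrite ?inE ?eqxx ?hu ?orbT // se.
  have := E2U1ge zS h2; ar.
- exists v, z, u; do !split => //; rewrite ?inE ?eqxx ?hu ?orbT //.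
  + by rewrite sym.
  + by rewrite sym.
  + move=> y; rewrite !inE => /orP [/eqP->|/orP [/eqP->|hy]] hvy; first by left.
      by rewrite irr in hvy.
    by right; apply: Hv.
  + move=> y; rewrite !inE => /orP [/eqP->|/orP [/eqP->|hy]] hvy; first by rewrite irr in hvy.
      by left.
    by right; apply: Hz.
Qed.

Lemma Lextra (S : {set T}) u v z y : u \in S -> v \notin S -> z \notin S ->
  e u v -> e u z -> e v z -> y \in S -> y != u -> (e v y || e z y) ->
  E2 S + 8 <= E2 (z |: (v |: S)).
Proof.
move=> hu hv hz huv huz hvz hy hyu /orP hvy.
have nvz := neq_e hvz.
have zS : z \notin v |: S by rewrite !inE negb_or eq_sym nvz.
have nuv : u != v by apply: contraNneq hv => <-.
have nyv : y != v by apply: contraNneq hv => <-.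
have huy : u != y by rewrite eq_sym.
case: hvy => hvy.
- have h1 := E2U1ge hv (deg2 (y1:=u) (y2:=y) (v:=v) hu hy huy (se huv) hvy).
  have h2 : 2 <= deg (v |: S) z.
    by apply: (deg2 (y1 := u) (y2 := v)) => //; rewrite ?inE ?eqxx ?hu ?orbT // se.
  have := E2U1ge zS h2; ar.
- have h1 := E2U1ge hv (deg1 hu (se huv)).
  have h2 : 3 <= deg (v |: S) z.
    apply: (deg3 (y1 := u) (y2 := v) (y3 := y));
      try (by rewrite !inE ?eqxx ?hu ?hy ?orbT); try done; try (by apply: se); by rewrite eq_sym.
  have := E2U1ge zS h2; ar.
Qed.


Lemma card2 (S : {set T}) v z : v \notin S -> z \notin S -> v != z -> #|z |: (v |: S)| = #|S| + 2.
Proof.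
move=> hv hz nvz; have zS : z \notin v |: S by rewrite !inE negb_or eq_sym nvz.
by rewrite cardU1 // cardU1 //; ar.
Qed.

Lemma P6step (S : {set T}) : P6 S -> Inv S -> #|S| <= 21 -> ~ closed S ->
  exists S', P6 S' /\ Inv S' /\ #|S'| = #|S| + 2 /\ free_pair S'.
Proof.
rewrite /P6 /Inv => hP hI h21 hc; have [u [v [z [hu hv huv huz hvz]]]] := not_closed hc.
case: (boolP (z \in S)) => hz.
  have := E2U1ge hv (deg2 hu hz (neq_e huz) (se huv) hvz) => hE.
  by exfalso; apply: (no_dense (S := v |: S)); rewrite cardU1 //; ar.
have nvz := neq_e hvz.
case: (classic (forall y, y \in S -> e v y -> y = u)) => Hv; last first.
  have [y [hy hvy hyu]] := excl Hv.
  have hE : E2 S + 8 <= E2 (z |: (v |: S)).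
    by apply: (Lextra hu hv hz huv huz hvz hy hyu); rewrite hvy.
  by exfalso; apply: (no_dense (S := z |: (v |: S))); rewrite card2 //; ar.
case: (classic (forall y, y \in S -> e z y -> y = u)) => Hz; last first.
  have [y [hy hzy hyu]] := excl Hz.
  have hE : E2 S + 8 <= E2 (z |: (v |: S)).
    by apply: (Lextra hu hv hz huv huz hvz hy hyu); rewrite hzy orbT.
  exfalso.
  by apply: (no_dense (S := z |: (v |: S))); rewrite card2 //; ar.
have [hc2 hE hf] := Lstep hu hv hz huv huz hvz Hv Hz.
exists (z |: (v |: S)); rewrite /P6 /Inv hc2; do !split => //; ar.
Qed.

Lemma P6_false (S : {set T}) : P6 S -> Inv S -> #|S| <= 21 -> ~ closed S -> False.
Proof.
move=> hP hI h hc; have [S' [hP' [hI' [hc' hf']]]] := P6step hP hI h hc.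
by apply: (chain P6step hP' hI') => //; ar.
Qed.

Definition Tgood (S : {set T}) := forall p q, p \in S -> q \in S -> e p q ->
  exists w, w \in S /\ e p w /\ e q w.
Definition DF (x : T) := forall p q r r', connect e x p -> e p q -> e p r -> e q r ->
  e p r' -> e q r' -> r = r'.
Definition inC x (S : {set T}) := forall y, y \in S -> connect e x y.

Lemma DFextra x (S : {set T}) u v z y : DF x -> inC x S -> Inv S -> #|S| <= 21 ->
  u \in S -> v \notin S -> z \notin S -> e u v -> e u z -> e v z ->
  y \in S -> y != u -> e v y -> False.
Proof.
rewrite /Inv => hDF hC hI h21 hu hv hz huv huz hvz hy hyu hvy.
have [u2 [hvu2 hyu2]] := tri hvy.
have nvz := neq_e hvz.
have cxv : connect e x v := connect_trans (hC u hu) (connect1 huv).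
have nyz : y != z by apply: contraNneq hz => <-.
have nuy : u != y by rewrite eq_sym.
case: (eqVneq u2 u) => [e1|n1].
  subst u2; have := hDF u v z y (hC u hu) huv huz hvz (se hyu2) hvy.
  by move/eqP; rewrite eq_sym (negbTE nyz).
case: (eqVneq u2 z) => [e2|n2].
  subst u2; have := hDF v z u y cxv hvz (se huv) (se huz) hvy (se hyu2).
  by move/eqP; rewrite eq_sym (negbTE hyu).
case: (boolP (u2 \in S)) => hu2.
  have := E2U1ge hv (deg3 hu hy hu2 nuy (neq_e hyu2) n1 (se huv) hvy hvu2) => hE.
  by apply: (no_dense (S := v |: S)); rewrite cardU1 //; ar.
have zS : z \notin v |: S by rewrite !inE negb_or eq_sym nvz.
have u2S : u2 \notin z |: (v |: S).
  by rewrite !inE negb_or n2 negb_or hu2 andbT; apply: contraTneq hvu2 => ->; rewrite irr.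
have h1 := E2U1ge hv (deg2 hu hy nuy (se huv) hvy).
have h2 : 2 <= deg (v |: S) z.
  apply: (deg2 (y1 := u) (y2 := v));
    try (by rewrite !inE ?eqxx ?hu ?orbT); try (by apply: se); by apply: contraNneq hv => <-.
have h3 := E2U1ge zS h2.
have h4 : 2 <= deg (z |: (v |: S)) u2.
  apply: (deg2 (y1 := v) (y2 := y));
    try (by rewrite !inE ?eqxx ?hy ?orbT); try (by apply: se); by apply: contraNneq hv => ->.
have h5 := E2U1ge u2S h4.
apply: (no_dense (S := u2 |: (z |: (v |: S)))); rewrite cardU1 // card2 //; ar.
Qed.

Lemma DFstep x (S : {set T}) : DF x -> (Tgood S /\ inC x S) -> Inv S -> #|S| <= 21 ->
  ~ closed S -> exists S', (Tgood S' /\ inC x S') /\ Inv S' /\ #|S'| = #|S| + 2 /\ free_pair S'.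
Proof.
move=> hDF [hT hC] hI h21 hc; have [u [v [z [hu hv huv huz hvz]]]] := not_closed hc.
case: (boolP (z \in S)) => hz.
  have [w [hw [huw hzw]]] := hT u z hu hz huz.
  have := hDF u z v w (hC u hu) huz huv (se hvz) huw hzw.
  by move=> ev; rewrite ev hw in hv.
have nvz := neq_e hvz.
case: (classic (forall y, y \in S -> e v y -> y = u)) => Hv; last first.
  have [y [hy hvy hyu]] := excl Hv.
  by case: (DFextra hDF hC hI h21 hu hv hz huv huz hvz hy hyu hvy).
case: (classic (forall y, y \in S -> e z y -> y = u)) => Hz; last first.
  have [y [hy hzy hyu]] := excl Hz.
  by case: (DFextra hDF hC hI h21 hu hz hv huz huv (se hvz) hy hyu hzy).
have [hc2 hE hf] := Lstep hu hv hz huv huz hvz Hv Hz.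
exists (z |: (v |: S)); rewrite /Inv hc2; split; last by split => //; rewrite /Inv in hI; ar.
split.
- move=> p q; rewrite !inE => /orP [/eqP->|/orP [/eqP->|hp]] /orP [/eqP->|/orP [/eqP->|hq]] hpq.
  + by rewrite irr in hpq.
  + by exists u; rewrite !inE hu !orbT; do !split; first [done | by apply: se].
  + have -> := Hz q hq hpq; exists v; rewrite !inE eqxx orbT.
    by do !split; first [done | by apply: se].
  + by exists u; rewrite !inE hu !orbT; do !split; first [done | by apply: se].
  + by rewrite irr in hpq.
  + have -> := Hv q hq hpq; exists z; rewrite !inE eqxx.
    by do !split; first [done | by apply: se].
  + have -> := Hz p hp (se hpq); exists v; rewrite !inE eqxx orbT.
    by do !split; first [done | by apply: se].
  + have -> := Hv p hp (se hpq); exists z; rewrite !inE eqxx.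
    by do !split; first [done | by apply: se].
  + have [w [hw [h1 h2]]] := hT p q hp hq hpq.
    by exists w; rewrite !inE hw !orbT.
- have cxv : connect e x v := connect_trans (hC u hu) (connect1 huv).
  have cxz : connect e x z := connect_trans (hC u hu) (connect1 huz).
  by move=> y; rewrite !inE => /orP [/eqP->|/orP [/eqP->|hy]] //; apply: hC.
Qed.

Lemma tri_set a b c : e a b -> e a c -> e b c ->
  [/\ #|c |: (b |: [set a])| = 3, 6 <= E2 (c |: (b |: [set a]))
    & free_pair (c |: (b |: [set a]))].
Proof.
move=> hab hac hbc.
have nab := neq_e hab; have nac := neq_e hac; have nbc := neq_e hbc.
have bS : b \notin [set a] by rewrite inE eq_sym.
have cS : c \notin b |: [set a] by rewrite !inE negb_or eq_sym nbc eq_sym nac.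
split.
- by rewrite cardU1 // cardU1 // cards1.
- have h1 := E2U1ge bS (deg1 (set11 a) (se hab)).
  have h2 : 2 <= deg (b |: [set a]) c.
    by apply: (deg2 (y1 := a) (y2 := b)); rewrite ?inE ?eqxx ?orbT //; apply: se.
  have := E2U1ge cS h2; ar.
- exists a, b, c; do !split => //; rewrite ?inE ?eqxx ?orbT //.
  + move=> y; rewrite !inE => /orP [/eqP->|/orP [/eqP->|/eqP->]] h; try by [right|left].
    by rewrite irr in h.
  + move=> y; rewrite !inE => /orP [/eqP->|/orP [/eqP->|/eqP->]] h; try by [right|left].
    by rewrite irr in h.
Qed.

Hypothesis nbv : forall v, ~ bad_vertex e v.

Lemma case2 x : DF x -> False.
Proof.
move=> hDF.
have [b [c /and3P [hxb hxc hbc]]] : in_triangle e x by apply: NNPP; apply: nbv.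
have [h3 hE hf] := tri_set hxb hxc hbc.
apply: (chain (P := fun S => Tgood S /\ inC x S) (fun S => @DFstep x S hDF) (S := c |: (b |: [set x]))) => //.
- split.
  + move=> p q; rewrite !inE => /orP [/eqP->|/orP [/eqP->|/eqP->]] /orP [/eqP->|/orP [/eqP->|/eqP->]] hpq;
    try by rewrite irr in hpq.
    all: try first [ by exists x; rewrite !inE eqxx ?orbT; do !split; first [done | by apply: se]
               | by exists b; rewrite !inE eqxx ?orbT; do !split; first [done | by apply: se]
               | by exists c; rewrite !inE eqxx ?orbT; do !split; first [done | by apply: se] ].
  + move=> y; rewrite !inE => /orP [/eqP->|/orP [/eqP->|/eqP->]];
    first [exact: connect0 | exact: (connect1 hxb) | exact: (connect1 hxc)].
- by rewrite /Inv h3; ar.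
- by rewrite h3.
Qed.


Ltac edec := match goal with
 | |- e ?p ?q = ?r =>
   first [ have ->: e p q = true by (first [done | by rewrite sym])
         | have ->: e p q = false by (apply/negbTE; first [done | by rewrite sym])
         | have ->: e p q = false by rewrite irr ];
   by []
 end.

Lemma TT_iso (C : {set T}) v1 v2 v3 v4 v5 :
  (forall y, (y \in C) = [|| y == v1, y == v2, y == v3, y == v4 | y == v5]) ->
  v1 != v2 -> v1 != v3 -> v1 != v4 -> v1 != v5 -> v2 != v3 -> v2 != v4 -> v2 != v5 ->
  v3 != v4 -> v3 != v5 -> v4 != v5 ->
  e v1 v2 -> e v1 v3 -> e v2 v3 -> e v2 v4 -> e v3 v4 -> e v3 v5 -> e v4 v5 ->
  ~~ e v1 v4 -> ~~ e v1 v5 -> ~~ e v2 v5 -> induced_iso e C TT.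
Proof.
move=> hC n12 n13 n14 n15 n23 n24 n25 n34 n35 n45 e12 e13 e23 e24 e34 e35 e45 m14 m15 m25.
pose f := fun i : 'I_5 => nth v1 [:: v1; v2; v3; v4; v5] i.
exists f; split; [|split].
- move=> [[|[|[|[|[|i]]]]] hi] [[|[|[|[|[|j]]]]] hj] //= h; try (by apply: val_inj);
  rewrite /f /= in h; subst; rewrite ?eqxx in n12 n13 n14 n15 n23 n24 n25 n34 n35 n45; done.
- move=> y; rewrite hC; split.
  + case/orP => [/eqP->|/orP [/eqP->|/orP [/eqP->|/orP [/eqP->|/eqP->]]]].
    * by exists (Ordinal (isT : 0 < 5)).
    * by exists (Ordinal (isT : 1 < 5)).
    * by exists (Ordinal (isT : 2 < 5)).
    * by exists (Ordinal (isT : 3 < 5)).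
    * by exists (Ordinal (isT : 4 < 5)).
  + move=> [[[|[|[|[|[|i]]]]] hi] <-] //=; rewrite /f /= eqxx ?orbT //.
- move=> [[|[|[|[|[|i]]]]] hi] [[|[|[|[|[|j]]]]] hj] //=; rewrite /f /=; edec.
Qed.


Lemma DD_iso (C : {set T}) v0 v1 v2 v3 v4 v5 v6 :
  (forall y, (y \in C) = [|| y == v0, y == v1, y == v2, y == v3, y == v4, y == v5 | y == v6]) ->
  uniq [:: v0; v1; v2; v3; v4; v5; v6] ->
  e v0 v1 -> e v0 v2 -> e v0 v3 -> e v1 v2 -> e v1 v3 -> e v0 v4 -> e v0 v5 -> e v0 v6 ->
  e v4 v5 -> e v4 v6 ->
  ~~ e v1 v4 -> ~~ e v1 v5 -> ~~ e v1 v6 -> ~~ e v2 v3 -> ~~ e v2 v4 -> ~~ e v2 v5 ->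
  ~~ e v2 v6 -> ~~ e v3 v4 -> ~~ e v3 v5 -> ~~ e v3 v6 -> ~~ e v5 v6 ->
  induced_iso e C DD.
Proof.
move=> hC hu e01 e02 e03 e12 e13 e04 e05 e06 e45 e46 m14 m15 m16 m23 m24 m25 m26 m34 m35 m36 m56.
pose s := [:: v0; v1; v2; v3; v4; v5; v6].
pose f := fun i : 'I_7 => nth v0 s i.
exists f; split; [|split].
- move=> i j h; apply: val_inj; apply/eqP; rewrite -(nth_uniq v0 _ _ hu).
  + by apply/eqP.
  + exact: (ltn_ord i).
  + exact: (ltn_ord j).
- move=> y; rewrite hC; split.
  + case/orP => [/eqP->|/orP [/eqP->|/orP [/eqP->|/orP [/eqP->|/orP [/eqP->|/orP [/eqP->|/eqP->]]]]]].
    * by exists (Ordinal (isT : 0 < 7)).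
    * by exists (Ordinal (isT : 1 < 7)).
    * by exists (Ordinal (isT : 2 < 7)).
    * by exists (Ordinal (isT : 3 < 7)).
    * by exists (Ordinal (isT : 4 < 7)).
    * by exists (Ordinal (isT : 5 < 7)).
    * by exists (Ordinal (isT : 6 < 7)).
  + move=> [[[|[|[|[|[|[|[|i]]]]]]] hi] <-] //=; rewrite /f /= eqxx ?orbT //.
- move=> [[|[|[|[|[|[|[|i]]]]]]] hi] [[|[|[|[|[|[|[|j]]]]]]] hj] //=; rewrite /f /=; edec.
Qed.


Lemma bp_contra (S : {set T}) p q : closed S -> p \in S -> q \in S -> p != q ->
 (forall b c, b \in S -> c \in S -> e p b -> e p c -> e b c -> b = q \/ c = q) ->
 (forall b c, b \in S -> c \in S -> e q b -> e q c -> e b c -> b = p \/ c = p) -> False.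
Proof.
move=> hcl hp hq npq H1 H2; apply: (nbp (u:=p) (v:=q)); split => //; split.
- move=> [b' [c' /and5P [h1 h2 h3 h4 h5]]].
  case: (H1 b' c' (hcl _ _ hp h1) (hcl _ _ hp h2) h1 h2 h3) => h.
    by rewrite h eqxx in h4.
  by rewrite h eqxx in h5.
- move=> [b' [c' /and5P [h1 h2 h3 h4 h5]]].
  case: (H2 b' c' (hcl _ _ hq h1) (hcl _ _ hq h2) h1 h2 h3) => h.
    by rewrite h eqxx in h4.
  by rewrite h eqxx in h5.
Qed.

Lemma nadj1 (S : {set T}) v u y : (forall y, y \in S -> e v y -> y = u) ->
  y \in S -> y != u -> ~~ e v y.
Proof. by move=> H hy nyu; apply/negP => h; rewrite (H y hy h) eqxx in nyu. Qed.

Lemma nadj2 (S : {set T}) v u z y : (forall y, y \in S -> e v y -> y = u \/ y = z) ->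
  y \in S -> y != u -> y != z -> ~~ e v y.
Proof.
move=> H hy nyu nyz; apply/negP => h.
by case: (H y hy h) => h'; [rewrite h' eqxx in nyu | rewrite h' eqxx in nyz].
Qed.

Ltac ek := match goal with
 | H : is_true (e ?p ?p) |- _ => by rewrite irr in H
 | H : is_true (e ?p ?q), N : is_true (~~ e ?p ?q) |- _ => by rewrite H in N
 | H : is_true (e ?p ?q), N : is_true (~~ e ?q ?p) |- _ => by rewrite sym H in N
 end.

Ltac neqt := first [done | by rewrite eq_sym].
Ltac adjt := first [done | by rewrite sym].

Ltac enum5 H := case/orP: H => [/eqP->|/orP [/eqP->|/orP [/eqP->|/orP [/eqP->|/eqP->]]]].

Lemma finishD x (C : {set T}) a b c d u z v :
  component e x = C -> closed C ->
  (forall y, (y \in C) = [|| y == v, y == d, y == c, y == b | y == a]) ->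
  e a b -> e a c -> e b c -> e a d -> e b d -> ~~ e c d ->
  a != b -> a != c -> a != d -> b != c -> b != d -> c != d ->
  v != a -> v != b -> v != c -> v != d ->
  [|| u == d, u == c, u == b | u == a] -> [|| z == d, z == c, z == b | z == a] ->
  e u z -> e v u -> e v z ->
  (forall y, y \in d |: (c |: (b |: [set a])) -> e v y -> y = u \/ y = z) ->
  induced_iso e (component e x) TT \/ induced_iso e (component e x) DD.
Proof.
move=> hcomp hcl hC hab hac hbc had hbd mcd nab nac nad nbc nbd ncd nva nvb nvc nvd hu hz huz hvu hvz Hv.
rewrite hcomp.
case/orP: hu => [/eqP ?|/orP [/eqP ?|/orP [/eqP ?|/eqP ?]]]; subst u;
case/orP: hz => [/eqP ?|/orP [/eqP ?|/orP [/eqP ?|/eqP ?]]]; subst z; try ek.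
all: try (have mva : ~~ e v a by apply: (nadj2 Hv); rewrite ?inE ?eqxx ?orbT //; neqt).
all: try (have mvb : ~~ e v b by apply: (nadj2 Hv); rewrite ?inE ?eqxx ?orbT //; neqt).
all: try (have mvc : ~~ e v c by apply: (nadj2 Hv); rewrite ?inE ?eqxx ?orbT //; neqt).
all: try (have mvd : ~~ e v d by apply: (nadj2 Hv); rewrite ?inE ?eqxx ?orbT //; neqt).
all: try (exfalso; apply: (bp_contra (S := C) (p := a) (q := b)) => //;
  [ by rewrite hC !eqxx ?orbT
  | by rewrite hC !eqxx ?orbT
  | move=> b' c'; rewrite !hC => hb hc; enum5 hb; enum5 hc; move=> h1 h2 h3;
    first [by left | by right | ek]
  | move=> b' c'; rewrite !hC => hb hc; enum5 hb; enum5 hc; move=> h1 h2 h3;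
    first [by left | by right | ek] ]).
all: left.
all: first
  [ apply: (TT_iso (C := C) (v1 := d) (v2 := b) (v3 := a) (v4 := c) (v5 := v));
    first [ by move=> y; rewrite hC; case: (y == a); case: (y == b); case: (y == c);
              case: (y == d); case: (y == v)
          | neqt | adjt ]
  | apply: (TT_iso (C := C) (v1 := c) (v2 := b) (v3 := a) (v4 := d) (v5 := v));
    first [ by move=> y; rewrite hC; case: (y == a); case: (y == b); case: (y == c);
              case: (y == d); case: (y == v)
          | neqt | adjt ]
  | apply: (TT_iso (C := C) (v1 := d) (v2 := a) (v3 := b) (v4 := c) (v5 := v));
    first [ by move=> y; rewrite hC; case: (y == a); case: (y == b); case: (y == c);
              case: (y == d); case: (y == v)
          | neqt | adjt ]
  | apply: (TT_iso (C := C) (v1 := c) (v2 := a) (v3 := b) (v4 := d) (v5 := v));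
    first [ by move=> y; rewrite hC; case: (y == a); case: (y == b); case: (y == c);
              case: (y == d); case: (y == v)
          | neqt | adjt ] ].
Qed.


Ltac enum7 H := case/orP: H => [/eqP->|/orP [/eqP->|/orP [/eqP->|/orP [/eqP->|/orP [/eqP->|/orP [/eqP->|/eqP->]]]]]].

Lemma finishC x (C : {set T}) a b c d u v z w :
  component e x = C -> closed C ->
  (forall y, (y \in C) = [|| y == w, y == z, y == v, y == d, y == c, y == b | y == a]) ->
  e a b -> e a c -> e b c -> e a d -> e b d -> ~~ e c d ->
  a != b -> a != c -> a != d -> b != c -> b != d -> c != d ->
  v != a -> v != b -> v != c -> v != d ->
  z != a -> z != b -> z != c -> z != d ->
  w != a -> w != b -> w != c -> w != d -> v != z -> w != v -> w != z ->
  [|| u == d, u == c, u == b | u == a] ->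
  e u v -> e u z -> e v z -> e w v -> e w u -> ~~ e w z ->
  (forall y, y \in d |: (c |: (b |: [set a])) -> e v y -> y = u) ->
  (forall y, y \in d |: (c |: (b |: [set a])) -> e z y -> y = u) ->
  (forall y, y \in d |: (c |: (b |: [set a])) -> e w y -> y = u) ->
  induced_iso e (component e x) TT \/ induced_iso e (component e x) DD.
Proof.
move=> hcomp hcl hC hab hac hbc had hbd mcd nab nac nad nbc nbd ncd nva nvb nvc nvd
  nza nzb nzc nzd nwa nwb nwc nwd nvz nwv nwz hu huv huz hvz hwv hwu mwz Hv Hz Hw.
rewrite hcomp.
case/orP: hu => [/eqP ?|/orP [/eqP ?|/orP [/eqP ?|/eqP ?]]]; subst u.
all: try (have mva : ~~ e v a by apply: (nadj1 Hv); rewrite ?inE ?eqxx ?orbT //; neqt).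
all: try (have mvb : ~~ e v b by apply: (nadj1 Hv); rewrite ?inE ?eqxx ?orbT //; neqt).
all: try (have mvc : ~~ e v c by apply: (nadj1 Hv); rewrite ?inE ?eqxx ?orbT //; neqt).
all: try (have mvd : ~~ e v d by apply: (nadj1 Hv); rewrite ?inE ?eqxx ?orbT //; neqt).
all: try (have mza : ~~ e z a by apply: (nadj1 Hz); rewrite ?inE ?eqxx ?orbT //; neqt).
all: try (have mzb : ~~ e z b by apply: (nadj1 Hz); rewrite ?inE ?eqxx ?orbT //; neqt).
all: try (have mzc : ~~ e z c by apply: (nadj1 Hz); rewrite ?inE ?eqxx ?orbT //; neqt).
all: try (have mzd : ~~ e z d by apply: (nadj1 Hz); rewrite ?inE ?eqxx ?orbT //; neqt).
all: try (have mwa : ~~ e w a by apply: (nadj1 Hw); rewrite ?inE ?eqxx ?orbT //; neqt).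
all: try (have mwb : ~~ e w b by apply: (nadj1 Hw); rewrite ?inE ?eqxx ?orbT //; neqt).
all: try (have mwc : ~~ e w c by apply: (nadj1 Hw); rewrite ?inE ?eqxx ?orbT //; neqt).
all: try (have mwd : ~~ e w d by apply: (nadj1 Hw); rewrite ?inE ?eqxx ?orbT //; neqt).
all: try (exfalso; apply: (bp_contra (S := C) (p := a) (q := b)) => //;
  [ by rewrite hC !eqxx ?orbT
  | by rewrite hC !eqxx ?orbT
  | move=> b' c'; rewrite !hC => hb hc; enum7 hb; enum7 hc; move=> h1 h2 h3;
    first [by left | by right | ek]
  | move=> b' c'; rewrite !hC => hb hc; enum7 hb; enum7 hc; move=> h1 h2 h3;
    first [by left | by right | ek] ]).
all: right.
all: first
  [ apply: (DD_iso (C := C) (v0 := a) (v1 := b) (v2 := c) (v3 := d) (v4 := v) (v5 := z) (v6 := w));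
    first [ by move=> y; rewrite hC; case: (y == a); case: (y == b); case: (y == c);
              case: (y == d); case: (y == v); case: (y == z); case: (y == w)
          | by rewrite /= !inE !negb_or; repeat (apply/andP; split); neqt
          | adjt ]
  | apply: (DD_iso (C := C) (v0 := b) (v1 := a) (v2 := c) (v3 := d) (v4 := v) (v5 := z) (v6 := w));
    first [ by move=> y; rewrite hC; case: (y == a); case: (y == b); case: (y == c);
              case: (y == d); case: (y == v); case: (y == z); case: (y == w)
          | by rewrite /= !inE !negb_or; repeat (apply/andP; split); neqt
          | adjt ] ].
Qed.


Lemma deriveC (S1 S0 : {set T}) u v z w u' z' :
  (forall y, (y \in S1) = [|| y == z, y == v | y \in S0]) ->
  v \notin S0 ->
  (forall y, y \in S0 -> e v y -> y = u) ->
  (forall y, y \in S1 -> e w y -> y = u' \/ y = z') ->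
  u' \in S1 -> z' \in S1 -> e u' w -> e u' z' -> e w z' -> e w v -> ~~ e w z ->
  e w u /\ (forall y, y \in S0 -> e w y -> y = u).
Proof.
move=> hS1 hv Hv Hw2 hu' hz' hu'w hu'z' hwz' hwv mwz.
have vS1 : v \in S1 by rewrite hS1 eqxx orbT.
have key : forall o, o \in S1 -> e v o -> e w o -> o = u.
  move=> o; rewrite hS1 => /orP [/eqP->|/orP [/eqP->|ho]] hvo hwo.
  - by rewrite hwo in mwz.
  - by rewrite irr in hvo.
  - exact: Hv.
have S0S1 : forall y, y \in S0 -> y \in S1 by move=> y hy; rewrite hS1 hy !orbT.
case: (Hw2 v vS1 hwv) => ev.
- subst u'.
  have zu := key z' hz' hu'z' hwz'; subst z'.
  split => // y hy hwy; case: (Hw2 y (S0S1 y hy) hwy) => // ey.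
  by subst y; rewrite hy in hv.
- subst z'.
  have uu := key u' hu' (se hu'z') (se hu'w); subst u'.
  split; first exact: se.
  move=> y hy hwy; case: (Hw2 y (S0S1 y hy) hwy) => // ey.
  by subst y; rewrite hy in hv.
Qed.

Lemma nbr3 (S2 S0 : {set T}) p q r u y :
  (forall y, (y \in S2) = [|| y == p, y == q, y == r | y \in S0]) ->
  (forall y, y \in S0 -> e r y -> y = u) -> y \in S2 -> e r y -> [\/ y = p, y = q | y = u].
Proof.
move=> hS Hr; rewrite hS => /orP [/eqP->|/orP [/eqP->|/orP [/eqP->|hy]]] h.
- by constructor 1.
- by constructor 2.
- by rewrite irr in h.
- by constructor 3; apply: Hr.
Qed.

Lemma bpB (S2 S0 : {set T}) u v z w :
  closed S2 ->
  (forall y, (y \in S2) = [|| y == w, y == z, y == v | y \in S0]) ->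
  (forall y, y \in S0 -> e v y -> y = u) -> (forall y, y \in S0 -> e z y -> y = u) ->
  v != z -> ~~ e w u -> False.
Proof.
move=> hcl hS Hv Hz nvz mwu.
have hS' : forall y, (y \in S2) = [|| y == w, y == v, y == z | y \in S0].
  by move=> y; rewrite hS; case: (y == v); case: (y == z); rewrite ?orbT.
apply: (bp_contra (S := S2) (p := v) (q := z)) => //.
- by rewrite hS eqxx !orbT.
- by rewrite hS eqxx !orbT.
- move=> b' c' hb hc h1 h2 h3.
  case: (nbr3 hS Hv hb h1) => ?; case: (nbr3 hS Hv hc h2) => ?; subst b' c'; try by [left|right].
  all: try ek.
- move=> b' c' hb hc h1 h2 h3.
  case: (nbr3 hS' Hz hb h1) => ?; case: (nbr3 hS' Hz hc h2) => ?; subst b' c'; try by [left|right].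
  all: try ek.
Qed.


Hypothesis nsc : forall x, ~ small_component e x.

Lemma case1 x a b c d : connect e x a -> e a b -> e a c -> e b c -> e a d -> e b d -> c != d ->
  induced_iso e (component e x) TT \/ induced_iso e (component e x) DD.
Proof.
move=> hxa hab hac hbc had hbd ncd.
have nab := neq_e hab; have nac := neq_e hac; have nad := neq_e had.
have nbc := neq_e hbc; have nbd := neq_e hbd.
have nca : c != a by rewrite eq_sym.
pose S0 := d |: (c |: (b |: [set a])).
have [h3 hE3 _] := tri_set hab hac hbc.
have dS : d \notin c |: (b |: [set a]).
  by rewrite !inE !negb_or; repeat (apply/andP; split); neqt.
have aS : a \in S0 by rewrite /S0 !inE eqxx ?orbT.
have bS : b \in S0 by rewrite /S0 !inE eqxx ?orbT.
have cS : c \in S0 by rewrite /S0 !inE eqxx ?orbT.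
have dS0 : d \in S0 by rewrite /S0 !inE eqxx ?orbT.
have cS0 : #|S0| = 4 by rewrite /S0 cardU1 // h3.
have hE0 : 10 <= E2 S0.
  have := E2U1ge dS (deg2 (y1 := a) (y2 := b) _ _ nab (se had) (se hbd)).
  by rewrite !inE !eqxx ?orbT => /(_ isT isT) h; rewrite /S0; ar.
have mcd : ~~ e c d.
  apply/negP => hcd.
  have := E2U1ge dS (deg3 (y1 := a) (y2 := b) (y3 := c) _ _ _ nab nbc nca
    (se had) (se hbd) (se hcd)).
  rewrite !inE !eqxx ?orbT => /(_ isT isT isT) h.
  by apply: (no_dense (S := S0)); rewrite cS0 //; rewrite /S0; ar.
have hC0 : inC x S0.
  move=> y; rewrite /S0 !inE => /orP [/eqP->|/orP [/eqP->|/orP [/eqP->|/eqP->]]].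
  - exact: connect_trans hxa (connect1 had).
  - exact: connect_trans hxa (connect1 hac).
  - exact: connect_trans hxa (connect1 hab).
  - exact: hxa.
have ncl : ~ closed S0.
  move=> hcl; apply: (@nsc x).
  by rewrite /small_component (comp_eq hcl aS hxa hC0) cS0.
have [u [v [z [hu hv huv huz hvz]]]] := not_closed ncl.
have nuz := neq_e huz.
have [nvd nvc nvb nva] : [/\ v != d, v != c, v != b & v != a].
  by move: hv; rewrite /S0 !inE !negb_or => /and4P.
have cxu : connect e x u := hC0 u hu.
case: (boolP (z \in S0)) => hz.
-
  have Hv : forall y, y \in S0 -> e v y -> y = u \/ y = z.
    move=> y hy hvy; apply: NNPP => hn.
    have nyu : y != u by apply/eqP => h; apply: hn; left.
    have nyz : z != y by apply/eqP => h; apply: hn; right.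
    have := E2U1ge hv (deg3 hu hz hy nuz nyz nyu (se huv) hvz hvy) => h.
    by apply: (no_dense (S := v |: S0)); rewrite cardU1 // cS0 //; ar.
  have cS1 : #|v |: S0| = 5 by rewrite cardU1 // cS0.
  have hE1 := E2U1ge hv (deg2 hu hz nuz (se huv) hvz).
  have hcl : closed (v |: S0).
    apply: NNPP => hn; apply: (P6_false (S := v |: S0)) => //; rewrite /P6 /Inv cS1; ar.
  have hC1 : inC x (v |: S0).
    move=> y; rewrite in_setU1 => /orP [/eqP->|hy]; last exact: hC0.
    exact: connect_trans cxu (connect1 huv).
  have hcomp := comp_eq hcl (setU1r v aS) hxa hC1.
  apply: (finishD hcomp hcl _ hab hac hbc had hbd mcd nab nac nad nbc nbd ncd nva nvb nvc nvd
     _ _ huz (se huv) hvz Hv).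
  + by move=> y; rewrite /S0 !inE.
  + by move: hu; rewrite /S0 !inE.
  + by move: hz; rewrite /S0 !inE.
-
  have nvz := neq_e hvz.
  have Hv : forall y, y \in S0 -> e v y -> y = u.
    apply: NNPP => hn; have [y [hy hvy hyu]] := excl hn.
    have hE : E2 S0 + 8 <= E2 (z |: (v |: S0)).
      by apply: (Lextra hu hv hz huv huz hvz hy hyu); rewrite hvy.
    by apply: (no_dense (S := z |: (v |: S0))); rewrite card2 // cS0; ar.
  have Hz : forall y, y \in S0 -> e z y -> y = u.
    apply: NNPP => hn; have [y [hy hzy hyu]] := excl hn.
    have hE : E2 S0 + 8 <= E2 (z |: (v |: S0)).
      by apply: (Lextra hu hv hz huv huz hvz hy hyu); rewrite hzy orbT.
    by apply: (no_dense (S := z |: (v |: S0))); rewrite card2 // cS0; ar.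
  have [c1 hE1 hf1] := Lstep hu hv hz huv huz hvz Hv Hz.
  pose S1 := z |: (v |: S0).
  have hS1 : forall y, (y \in S1) = [|| y == z, y == v | y \in S0].
    by move=> y; rewrite /S1 in_setU1 in_setU1.
  have [nzd nzc nzb nza] : [/\ z != d, z != c, z != b & z != a].
    by move: hz; rewrite /S0 !inE !negb_or => /and4P.
  have nuv : u != v by apply: contraNneq hv => <-.
  have nuz' : u != z by apply: contraNneq hz => <-.
  have uS1 : u \in S1 by rewrite hS1 hu !orbT.
  have vS1 : v \in S1 by rewrite hS1 eqxx orbT.
  have zS1 : z \in S1 by rewrite hS1 eqxx.
  have aS1 : a \in S1 by rewrite hS1 aS !orbT.
  have hC1 : inC x S1.
    move=> y; rewrite hS1 => /orP [/eqP->|/orP [/eqP->|hy]]; last exact: hC0.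
    - exact: connect_trans cxu (connect1 huz).
    - exact: connect_trans cxu (connect1 huv).
  have ncl1 : ~ closed S1 := fun h => closed_free h hf1.
  have [u' [w [z' [hu' hw hu'w hu'z' hwz']]]] := not_closed ncl1.
  have [nwz nwv hw0] : [/\ w != z, w != v & w \notin S0].
    by move: hw; rewrite hS1 !negb_or => /and3P.
  have [nwd nwc nwb nwa] : [/\ w != d, w != c, w != b & w != a].
    by move: hw0; rewrite /S0 !inE !negb_or => /and4P.
  have cS1 : #|S1| = 6 by rewrite /S1 c1 cS0.
  have hE1' : 16 <= E2 S1 by rewrite /S1; ar.
  case: (boolP (z' \in S1)) => hz'.
  + have nu'z' := neq_e hu'z'.
    have Hw2 : forall y, y \in S1 -> e w y -> y = u' \/ y = z'.
      move=> y hy hwy; apply: NNPP => hn.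
      have nyu : y != u' by apply/eqP => h; apply: hn; left.
      have nyz : z' != y by apply/eqP => h; apply: hn; right.
      have := E2U1ge hw (deg3 hu' hz' hy nu'z' nyz nyu (se hu'w) hwz' hwy) => h.
      by apply: (no_dense (S := w |: S1)); rewrite cardU1 // cS1 //; ar.
    pose S2 := w |: S1.
    have cS2 : #|S2| = 7 by rewrite /S2 cardU1 // cS1.
    have hE2 := E2U1ge hw (deg2 hu' hz' nu'z' (se hu'w) hwz').
    have hcl2 : closed S2.
      apply: NNPP => hn; apply: (P6_false (S := S2)) => //; rewrite /P6 /Inv cS2 /S2; ar.
    have hS2 : forall y, (y \in S2) = [|| y == w, y == z, y == v | y \in S0].
      by move=> y; rewrite /S2 in_setU1 hS1.
    have hC2 : inC x S2.
      move=> y; rewrite /S2 in_setU1 => /orP [/eqP->|hy]; last exact: hC1.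
      exact: connect_trans (hC1 u' hu') (connect1 hu'w).
    have aS2 : a \in S2 by rewrite hS2 aS !orbT.
    have hcomp := comp_eq hcl2 aS2 hxa hC2.
    have hS2f : forall y, (y \in S2) =
        [|| y == w, y == z, y == v, y == d, y == c, y == b | y == a].
      by move=> y; rewrite hS2 /S0 !inE.
    have hum : [|| u == d, u == c, u == b | u == a] by move: hu; rewrite /S0 !inE.
    case: (boolP (e w v)) => hwv; case: (boolP (e w z)) => hwz.
    * exfalso.
      have mwu : ~~ e w u.
        apply/negP => hwu.
        move/eqP: nvz => nvz'; move/eqP: nuv => nuv'; move/eqP: nuz' => nuz''.
        case: (Hw2 v vS1 hwv) => ev; case: (Hw2 z zS1 hwz) => ez;
        case: (Hw2 u uS1 hwu) => eu; congruence.
      exact: (bpB hcl2 hS2 Hv Hz nvz mwu).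
    * have [hwu Hw] := deriveC hS1 hv Hv Hw2 hu' hz' hu'w hu'z' hwz' hwv hwz.
      exact: (finishC hcomp hcl2 hS2f hab hac hbc had hbd mcd nab nac nad nbc nbd ncd
        nva nvb nvc nvd nza nzb nzc nzd nwa nwb nwc nwd nvz nwv nwz hum huv huz hvz hwv hwu hwz
        Hv Hz Hw).
    * have hS1' : forall y, (y \in S1) = [|| y == v, y == z | y \in S0].
        by move=> y; rewrite hS1; case: (y == v); case: (y == z).
      have [hwu Hw] := deriveC hS1' hz Hz Hw2 hu' hz' hu'w hu'z' hwz' hwz hwv.
      have hS2f' : forall y, (y \in S2) =
          [|| y == w, y == v, y == z, y == d, y == c, y == b | y == a].
        by move=> y; rewrite hS2f; case: (y == v); case: (y == z).
      have nzv : z != v by rewrite eq_sym.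
      exact: (finishC hcomp hcl2 hS2f' hab hac hbc had hbd mcd nab nac nad nbc nbd ncd
        nza nzb nzc nzd nva nvb nvc nvd nwa nwb nwc nwd nzv nwz nwv hum huz huv (se hvz) hwz hwu hwv
        Hz Hv Hw).
    * exfalso; apply: (closed_free hcl2); exists v, z, u.
      have uS2 : u \in S2 by rewrite hS2 hu !orbT.
      do !split => //; rewrite ?hS2 ?eqxx ?orbT //; try exact: se.
      - move=> y; rewrite hS2 => /orP [/eqP->|/orP [/eqP->|/orP [/eqP->|hy]]] h.
        + by rewrite sym h in hwv.
        + by left.
        + by rewrite irr in h.
        + by right; apply: Hv.
      - move=> y; rewrite hS2 => /orP [/eqP->|/orP [/eqP->|/orP [/eqP->|hy]]] h.
        + by rewrite sym h in hwz.
        + by rewrite irr in h.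
        + by left.
        + by right; apply: Hz.
  + have nwz' := neq_e hwz'.
    have Hw1 : forall y, y \in S1 -> e w y -> y = u'.
      apply: NNPP => hn; have [y [hy hwy hyu]] := excl hn.
      have hE : E2 S1 + 8 <= E2 (z' |: (w |: S1)).
        by apply: (Lextra hu' hw hz' hu'w hu'z' hwz' hy hyu); rewrite hwy.
      by apply: (no_dense (S := z' |: (w |: S1))); rewrite card2 // cS1; ar.
    have Hz1 : forall y, y \in S1 -> e z' y -> y = u'.
      apply: NNPP => hn; have [y [hy hzy hyu]] := excl hn.
      have hE : E2 S1 + 8 <= E2 (z' |: (w |: S1)).
        by apply: (Lextra hu' hw hz' hu'w hu'z' hwz' hy hyu); rewrite hzy orbT.
      by apply: (no_dense (S := z' |: (w |: S1))); rewrite card2 // cS1; ar.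
    have [c2 hE2 hf2] := Lstep hu' hw hz' hu'w hu'z' hwz' Hw1 Hz1.
    exfalso; apply: (chain P6step (S := z' |: (w |: S1))) => //; rewrite /P6 /Inv c2 cS1; ar.
Qed.


Lemma main_in x : induced_iso e (component e x) TT \/ induced_iso e (component e x) DD.
Proof.
case: (classic (exists a b c d, [/\ connect e x a, e a b, e a c, e b c &
   [/\ e a d, e b d & c != d]])) => [[a [b [c [d [hxa hab hac hbc [had hbd ncd]]]]]] | hn].
  exact: (case1 hxa hab hac hbc had hbd ncd).
exfalso; apply: (case2 (x := x)) => p q r r' hp hpq hpr hqr hpr' hqr'.
apply: NNPP => hne; apply: hn; exists p, q, r, r'; split => //; split => //.
by apply/eqP.
Qed.

End G.

Unset Implicit Arguments.

Theorem mainTheorem19 (T : finType) (e : rel T) :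
  simple_graph e ->
  K3_1_stable e ->
  (forall (n : nat) (H : rel 'I_n),
      n < 25 -> simple_graph H -> 10 * n < 7 * num_edges H ->
      ~ contains_subgraph e H) ->
  forall x : T, induced_iso e (component e x) TT \/ induced_iso e (component e x) DD.
Proof.
move=> [sym irr] [nbv [nbe [nbp nsc]]] dense x.
by apply: main_in.
Qed.
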